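(* Let a compilation chain be given, and let ${\sim}\subseteq \mathit{Trace}_S\times\mathit{Trace}_T$ and a Galois connection $\tau : (2^{\mathit{Trace}_S},\subseteq) \rightleftarrows (2^{\mathit{Trace}_T},\subseteq) : \sigma$ ($\tau$ lower adjoint) correspond to each other, in the sense that $s \sim t \iff t \in \tau(\{s\})$ for all $s,t$ (equivalently, $\tau$ and $\sigma$ are the existential and universal images of $\sim$). Then $\mathit{TP}^{\tau} \iff \mathit{CC}^{\sim} \iff \mathit{TP}^{\sigma}$, where $\mathit{TP}^{\tau} \equiv \forall \pi_S.\ \forall W.\ W \models \pi_S \Rightarrow W{\downarrow}\models \tau(\pi_S)$ and $\mathit{TP}^{\sigma}\equiv \forall \pi_T.\ \forall W.\ W\models\sigma(\pi_T) \Rightarrow W{\downarrow}\models \pi_T$.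
   Context: A compilation chain consists of a set of source (whole) programs $W$, a set of target programs, a set $\mathit{Trace}_S$ of source traces and a set $\mathit{Trace}_T$ of target traces, a source semantics relation $W \rightsquigarrow s$ (program $W$ can produce trace $s$), a target semantics relation of the same kind, and a compiler mapping each source program $W$ to a target program $W{\downarrow}$. A trace property is a set of traces; $W \models \pi$ iff every trace $W$ produces belongs to $\pi$. The existential image of $\sim$ is $\tilde\tau(\pi) = \{t \mid \exists s.\ s\sim t \wedge s\in\pi\}$ and its universal image is $\tilde\sigma(\pi)=\{s\mid \forall t.\ s\sim t\Rightarrow t\in\pi\}$. A Galois connection with lower adjoint $\tau$ means $\tau(\pi_S)\subseteq\pi_T \iff \pi_S\subseteq\sigma(\pi_T)$ for all $\pi_S,\pi_T$. The criterion $\mathit{CC}^{\sim}$ states: for every source program $W$ and every $t\in\mathit{Trace}_T$, if $W{\downarrow}\rightsquigarrow t$ then there exists $s$ with $s\sim t$ and $W\rightsquigarrow s$. *)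

(* Defs.v *)
Definition prop (A : Type) := A -> Prop.

Definition subsetP {A : Type} (p q : prop A) : Prop := forall x, p x -> q x.

Definition singleton {A : Type} (a : A) : prop A := fun x => x = a.

Record CompChain := {
  SrcProg : Type;
  TgtProg : Type;
  TraceS : Type;
  TraceT : Type;
  semS : SrcProg -> TraceS -> Prop;
  semT : TgtProg -> TraceT -> Prop;
  compile : SrcProg -> TgtProg
}.

Definition satS (C : CompChain) (W : SrcProg C) (pi : prop (TraceS C)) : Prop :=
  forall s, semS C W s -> pi s.
Definition satT (C : CompChain) (W : TgtProg C) (pi : prop (TraceT C)) : Prop :=
  forall t, semT C W t -> pi t.

Definition galois_connection {A B : Type}
  (tau : prop A -> prop B) (sigma : prop B -> prop A) : Prop :=
  forall (pA : prop A) (pB : prop B), subsetP (tau pA) pB <-> subsetP pA (sigma pB).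

Definition TP_tau (C : CompChain) (tau : prop (TraceS C) -> prop (TraceT C)) : Prop :=
  forall (piS : prop (TraceS C)) (W : SrcProg C),
    satS C W piS -> satT C (compile C W) (tau piS).

Definition TP_sigma (C : CompChain) (sigma : prop (TraceT C) -> prop (TraceS C)) : Prop :=
  forall (piT : prop (TraceT C)) (W : SrcProg C),
    satS C W (sigma piT) -> satT C (compile C W) piT.

Definition CC_rel (C : CompChain) (rel : TraceS C -> TraceT C -> Prop) : Prop :=
  forall (W : SrcProg C) (t : TraceT C),
    semT C (compile C W) t -> exists s, rel s t /\ semS C W s.

(* Main.v *)
Require Import Defs.

Section Aux.
Context {A B : Type} (tau : prop A -> prop B) (sigma : prop B -> prop A)
  (Hgc : galois_connection tau sigma).

Lemma gc_mono (p q : prop A) : subsetP p q -> subsetP (tau p) (tau q).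
Proof.
  intros H. apply (proj2 (Hgc p (tau q))).
  intros x Hx. apply (proj1 (Hgc q (tau q))); [intros y Hy; exact Hy | auto].
Qed.

Lemma gc_sing (p : prop B) (s : A) : sigma p s <-> subsetP (tau (singleton s)) p.
Proof.
  split.
  - intros H. apply (proj2 (Hgc _ _)). intros x Hx. unfold singleton in Hx. subst. exact H.
  - intros H. apply (proj1 (Hgc _ _) H). reflexivity.
Qed.

Lemma gc_exist (p : prop A) (t : B) :
  tau p t <-> exists s, p s /\ tau (singleton s) t.
Proof.
  split.
  - intros H.
    assert (Hs : subsetP (tau p) (fun t => exists s, p s /\ tau (singleton s) t)).
    { apply (proj2 (Hgc _ _)). intros s Hs. apply gc_sing. intros y Hy. eauto. }
    exact (Hs t H).
  - intros [s [Hs Ht]]. apply (gc_mono (singleton s) p); auto.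
    intros x Hx. unfold singleton in Hx. subst. exact Hs.
Qed.
End Aux.

Theorem theorem2p8 (C : CompChain)
  (rel : TraceS C -> TraceT C -> Prop)
  (tau : prop (TraceS C) -> prop (TraceT C))
  (sigma : prop (TraceT C) -> prop (TraceS C))
  (Hgc : galois_connection tau sigma)
  (Hcorr : forall s t, rel s t <-> tau (singleton s) t) :
  (TP_tau C tau <-> CC_rel C rel) /\ (CC_rel C rel <-> TP_sigma C sigma).
Proof.
  unfold TP_tau, TP_sigma, CC_rel, satS, satT.
  split; split.
  - intros H W t Ht.
    assert (X := H (semS C W) W (fun s h => h) t Ht).
    apply (gc_exist tau sigma Hgc) in X. destruct X as [s [Hs Hst]].
    exists s. split; [apply Hcorr; exact Hst | exact Hs].
  - intros H piS W HW t Ht. destruct (H W t Ht) as [s [Hr Hs]].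
    apply (gc_exist tau sigma Hgc). exists s. split; [auto | apply Hcorr; exact Hr].
  - intros H piT W HW t Ht. destruct (H W t Ht) as [s [Hr Hs]].
    apply (proj1 (gc_sing tau sigma Hgc piT s) (HW s Hs)). apply Hcorr; exact Hr.
  - intros H W t Ht.
    apply (H (fun t => exists s, rel s t /\ semS C W s) W); [|exact Ht].
    intros s Hs. apply (gc_sing tau sigma Hgc). intros y Hy.
    exists s. split; [apply Hcorr; exact Hy | exact Hs].
Qed.
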